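(* Let $n\ge 1$. The totally nonnegative complete flag variety $\mathrm{Fl}_n^{\geq 0}$ equals the set $\{F\in \mathrm{Fl}_n \mid P_I(F)\geq 0 \text{ for all } I\subseteq [n]\}$, i.e. a complete flag $F$ lies in $\mathrm{Fl}_n^{\ge 0}$ if and only if it has a representing matrix all of whose flag minors are nonnegative.
   Context: $\mathrm{Fl}_n$ is the real complete flag variety: the set of chains $\{0\}=V_0\subsetneq V_1\subsetneq\cdots\subsetneq V_n=\mathbb{R}^n$ of linear subspaces. A flag is represented by an invertible real $n\times n$ matrix $M$ such that $V_i$ is the span of the top $i$ rows of $M$; two matrices represent the same flag iff they differ by left multiplication by an invertible lower triangular matrix. For $I\subseteq[n]$, the Plücker coordinate (flag minor) $P_I(M)$ is the determinant of the submatrix of $M$ in rows $1,\dots,|I|$ and columns $I$; for a flag $F$, $(P_I(F))_I$ is defined up to a positive or negative rescaling of each group $\{P_I: |I|=k\}$, and ''$P_I(F)\ge 0$ for all $I$'' means that some representing matrix $M$ of $F$ has $P_I(M)\ge 0$ for all $I\subseteq[n]$. A real matrix is totally positive if all its minors are positive. $\mathrm{Fl}_n^{>0}$ is the set of flags having a totally positive representing matrix, and $\mathrm{Fl}_n^{\geq 0}$ is the closure of $\mathrm{Fl}_n^{>0}$ in $\mathrm{Fl}_n$ in the Euclidean topology. *)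

(* Defs.v *)
From HB Require Import structures.
From mathcomp Require Import all_boot all_order all_algebra.
From mathcomp Require Import all_classical all_reals all_analysis.
Set Implicit Arguments. Unset Strict Implicit. Unset Printing Implicit Defensive.
Import Order.TTheory GRing.Theory Num.Theory.
Import numFieldTopology.Exports numFieldNormedType.Exports.
Local Open Scope classical_set_scope.
Local Open Scope ring_scope.

Section Flags.
Variable R : realType.
Variable n : nat.

Lemma card_set_ord_le (I : {set 'I_n}) : (#|I| <= n)%N.
Proof. by rewrite -[X in (_ <= X)%N]card_ord max_card. Qed.

Definition top_rows (I : {set 'I_n}) (i : 'I_#|I|) : 'I_n :=
  Ordinal (leq_trans (ltn_ord i) (card_set_ord_le I)).

(* Plücker coordinate (flag minor) P_I(M): determinant of the submatrix of M
   in rows 1..|I| and columns I (in increasing order; enum of a set of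
   ordinals lists it increasingly). *)
Definition flag_minor (M : 'M[R]_n) (I : {set 'I_n}) : R :=
  \det (mxsub (@top_rows I) (fun j : 'I_#|I| => @enum_val _ (pred_of_set I) j) M).

Definition incr k (f : 'I_k -> 'I_n) := forall i j : 'I_k, (i < j)%N -> (f i < f j)%N.

Definition totally_positive (M : 'M[R]_n) : Prop :=
  forall k (f g : 'I_k -> 'I_n), incr f -> incr g -> 0 < \det (mxsub f g M).

(* M and N represent the same flag: N = L M with L invertible lower triangular
   (is_trig_mx L <-> forall i j, i < j -> L i j = 0). *)
Definition same_flag (M N : 'M[R]_n) : Prop :=
  exists L : 'M[R]_n, [/\ L \in unitmx, is_trig_mx L & N = L *m M].

(* Representing matrices of flags: invertible matrices. *)
Definition flag_rep (M : 'M[R]_n) : Prop := M \in unitmx.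

Definition Fl_pos (M : 'M[R]_n) : Prop :=
  flag_rep M /\ exists N, totally_positive N /\ same_flag N M.

(* Open sets of Fl_n for the quotient (Euclidean) topology, described via
   their (saturated) preimages in GL_n: S is open in GL_n, hence in M_n. *)
Definition flag_open_set (S : set 'M[R]_n) : Prop :=
  open S /\ S `<=` flag_rep /\ (forall M N, same_flag M N -> S M -> S N).

(* Fl_n^{>=0}: closure of Fl_n^{>0} in Fl_n *)
Definition Fl_nonneg (M : 'M[R]_n) : Prop :=
  flag_rep M /\
  forall S, flag_open_set S -> S M -> exists N, S N /\ Fl_pos N.

End Flags.

(* Main.v *)
Require Import Defs.
From HB Require Import structures.
From mathcomp Require Import all_boot all_order all_algebra all_fingroup.
From mathcomp Require Import all_classical all_reals all_analysis.
From mathcomp Require Import ring lra.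
Import Order.TTheory GRing.Theory Num.Theory.
Import numFieldTopology.Exports numFieldNormedType.Exports.
Set Implicit Arguments. Unset Strict Implicit. Unset Printing Implicit Defensive.
Local Open Scope ring_scope.

Section CB.
Variable R : comRingType.

Lemma detM_expand k n (X : 'M[R]_(k,n)) (Y : 'M[R]_(n,k)) :
  \det (X *m Y) = \sum_(f : {ffun 'I_k -> 'I_n}) (\prod_i X i (f i)) * \det (rowsub f Y).
Proof.
transitivity (\sum_(s : 'S_k) \sum_(f : {ffun 'I_k -> 'I_n})
   (-1) ^+ s * ((\prod_i X i (f i)) * \prod_i Y (f i) (s i))).
  apply: eq_bigr => s _; rewrite -big_distrr /=; congr (_ * _).
  rewrite (eq_bigr (fun i => \sum_j X i j * Y j (s i))); last by move=> i _; rewrite mxE.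
  rewrite bigA_distr_bigA /=; apply: eq_bigr => f _; by rewrite big_split.
rewrite exchange_big /=; apply: eq_bigr => f _.
rewrite big_distrr /=; apply: eq_bigr => s _; rewrite mulrCA; congr (_ * (_ * _)).
by apply: eq_bigr => i _; rewrite mxE.
Qed.

Definition hK n (d : 'I_n) k (K : {set 'I_n}) (r : 'I_k) : 'I_n := nth d (enum K) r.
Arguments hK {n} d k K r.

Lemma enum_set_sorted n (K : {set 'I_n}) : sorted (fun x y : 'I_n => (x < y)%N) (enum K).
Proof.
have Hs : sorted (fun x y : 'I_n => (x < y)%N) (enum 'I_n).
  by have := iota_ltn_sorted 0 n; rewrite -val_enum_ord sorted_map.
have ie : index_enum 'I_n = enum 'I_n by rewrite -deprecated_filter_index_enum filter_predT.
rewrite -deprecated_filter_index_enum ie.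
apply: sorted_filter => //; move=> x y z; exact: ltn_trans.
Qed.

Section hKprops.
Variables (n : nat) (d : 'I_n) (k : nat) (K : {set 'I_n}).
Hypothesis cK : #|K| = k.
Let h := hK d k K.

Lemma size_enumK : size (enum K) = k.
Proof. by rewrite -cardE. Qed.

Lemma hK_mem r : h r \in K.
Proof. by rewrite -mem_enum /h /hK mem_nth // size_enumK. Qed.

Lemma hK_inj : injective h.
Proof.
move=> r1 r2 /eqP; rewrite /h /hK nth_uniq ?size_enumK ?enum_uniq //.
by move/eqP/val_inj.
Qed.

Lemma hK_incr (r1 r2 : 'I_k) : (r1 < r2)%N -> (h r1 < h r2)%N.
Proof.
move=> lt12; rewrite /h /hK.
apply: (sorted_ltn_nth _ d (enum_set_sorted K)) => //; last by rewrite inE size_enumK.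
  by move=> x y z; exact: ltn_trans.
by rewrite inE size_enumK.
Qed.

Lemma hK_index x : x \in K -> (index x (enum K) < k)%N.
Proof. by move=> xK; rewrite -size_enumK index_mem mem_enum. Qed.

Lemma hK_surj x : x \in K -> exists r, h r = x.
Proof.
move=> xK; exists (Ordinal (hK_index xK)); by rewrite /h /hK /= nth_index ?mem_enum.
Qed.
End hKprops.

Lemma cauchy_binet k n (d : 'I_n) (X : 'M[R]_(k,n)) (Y : 'M[R]_(n,k)) :
  \det (X *m Y) = \sum_(K : {set 'I_n} | #|K| == k)
      \det (colsub (hK d k K) X) * \det (rowsub (hK d k K) Y).
Proof.
rewrite detM_expand.
rewrite (partition_big (fun f : {ffun 'I_k -> 'I_n} => [set f i | i in 'I_k]) predT) //=.
rewrite (bigID (fun K : {set 'I_n} => #|K| == k)) /= [X in _ + X]big1 ?addr0; last first.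
  move=> K HK; apply: big1 => f /eqP imK.
  have : ~~ injectiveb f.
    apply/negP => /injectiveP inj; move: HK; rewrite -imK card_imset // card_ord eqxx //.
  case/injectivePn => i1 [i2 Di12 Ef12]; rewrite (determinant_alternate Di12) ?mulr0 //.
  by move=> j; rewrite !mxE Ef12.
apply: eq_bigr => K /eqP cK.
set h := hK d k K.
pose phi := fun s : 'S_k => [ffun i => h (s i)].
have imphi : forall s, [set phi s i | i in 'I_k] == K.
  move=> s; apply/eqP/setP => x; apply/imsetP/idP.
    by case=> i _ ->; rewrite ffunE hK_mem.
  move=> xK; case: (hK_surj d cK xK) => r <-.
  by exists ((s^-1)%g r) => //; rewrite ffunE permKV.
rewrite (reindex phi) /=; last first.
  pose g := fun f : {ffun 'I_k -> 'I_n} => [ffun i => insubd i (index (f i) (enum K)) : 'I_k].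
  exists (fun f => insubd (1%g : 'S_k) (g f)).
    move=> s _.
    have -> : g (phi s) = pval s.
      apply/ffunP => i; rewrite !ffunE /h /hK index_uniq ?(size_enumK cK) ?enum_uniq //.
      by rewrite valKd pvalE.
    exact: valKd.
  move=> f; rewrite inE => /eqP imf.
  have fK : forall i, f i \in K by move=> i; rewrite -imf; apply: imset_f.
  have finj : injective f.
    move=> i j; have /imset_injP : #|[set f x | x in 'I_k]| == #|'I_k|.
      by rewrite imf cK card_ord.
    by move=> H; apply: H.
  have gE : forall i, val (g f i) = index (f i) (enum K).
    by move=> i; rewrite ffunE insubdK //; change (index (f i) (enum K) < k)%N; exact: (hK_index cK (fK i)).
  have ginj : injectiveb (g f).
    apply/injectiveP => i j /(congr1 val); rewrite !gE => e.
    apply: finj; rewrite -[f i](@nth_index _ d _ (enum K)) ?mem_enum ?fK // e.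
    by rewrite nth_index ?mem_enum ?fK.
  apply/ffunP => i; rewrite ffunE.
  have -> : (insubd (1%g : 'S_k) (g f)) i = g f i by rewrite -pvalE insubdK.
  by rewrite /h /hK gE nth_index ?mem_enum ?fK.
rewrite (eq_bigl predT); last by move=> s; rewrite imphi.
have rowE : forall s, \det (rowsub (phi s) Y) = (-1) ^+ s * \det (rowsub h Y).
  move=> s; have -> : rowsub (phi s) Y = row_perm s (rowsub h Y).
    by apply/matrixP => i j; rewrite !mxE ffunE.
  by rewrite row_permE det_mulmx det_perm.
under eq_bigr do rewrite rowE.
set D := \det (rowsub h Y).
rewrite /determinant big_distrl /=; apply: eq_bigr => s _.
rewrite mulrCA mulrA; congr (_ * _ * _); apply: eq_bigr => i _.
by rewrite !mxE ffunE.
Qed.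
End CB.
Arguments hK {n} d k K r.
Section Cauchy.
Variable R : realFieldType.

Lemma det_scale_rc k (p q : 'I_k -> R) (A : 'I_k -> 'I_k -> R) :
  \det (\matrix_(i, j) (p i * A i j * q j)) = (\prod_i p i) * \det (\matrix_(i, j) A i j) * \prod_i q i.
Proof.
have -> : \matrix_(i, j) (p i * A i j * q j) =
   diag_mx (\row_i p i) *m (\matrix_(i, j) A i j) *m diag_mx (\row_i q i).
  by apply/matrixP => i j; rewrite mul_mx_diag mul_diag_mx !mxE.
by rewrite !det_mulmx !det_diag; congr (_ * _ * _); apply: eq_bigr => i _; rewrite mxE.
Qed.

Lemma cauchy_pos k (x y : 'I_k -> R) :
  (forall i j : 'I_k, (i < j)%N -> x i < x j) ->
  (forall i j : 'I_k, (i < j)%N -> y i < y j) ->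
  (forall i, 0 < x i) -> (forall i, 0 < y i) ->
  0 < \det (\matrix_(i, j) (x i + y j)^-1).
Proof.
elim: k x y => [|k IH] x y xi yi xp yp; first by rewrite det_mx00.
set C : 'M[R]_(1 + k) := \matrix_(i, j) (x i + y j)^-1.
pose o : 'I_(1 + k) := lshift k ord0.
pose a := x o; pose b := y o.
pose xs := fun i : 'I_k => x (rshift 1 i).
pose ys := fun i : 'I_k => y (rshift 1 i).
have ao : forall i, a < xs i by move=> i; apply: xi.
have bo : forall i, b < ys i by move=> i; apply: yi.
have ap : 0 < a by apply: xp.
have bp : 0 < b by apply: yp.
have xsp : forall i, 0 < xs i by move=> i; apply: xp.
have ysp : forall i, 0 < ys i by move=> i; apply: yp.
pose E : 'M[R]_(1 + k) := block_mx 1%:M 0 (- (C o o)^-1 *: dlsubmx C) 1%:M.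
have detE : \det E = 1 by rewrite det_lblock !det1 mulr1.
have EC : E *m C = block_mx (ulsubmx C) (ursubmx C) 0
     (\matrix_(i, j) ((xs i - a) / (xs i + b) * (xs i + ys j)^-1 * ((ys j - b) / (a + ys j)))).
  have -> : E *m C = E *m block_mx (ulsubmx C) (ursubmx C) (dlsubmx C) (drsubmx C) by rewrite submxK.
  rewrite /E mulmx_block !mul1mx !mul0mx ?addr0 ?add0r.
  congr block_mx.
    apply/matrixP => i j; rewrite !mxE big_ord1 !mxE.
    rewrite (_ : j = ord0) ?ord1 //.
    have -> : lshift k (ord0 : 'I_1) = o by [].
    have h1 : x o + y o != 0 by rewrite gt_eqF // addr_gt0.
    have h2 : x (rshift 1 i) + y o != 0 by rewrite gt_eqF // addr_gt0.
    by field; rewrite h1 h2.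
  apply/matrixP => i j; rewrite !mxE big_ord1 !mxE.
  have -> : lshift k (ord0 : 'I_1) = o by [].
  rewrite -/a -/b /xs /ys.
  set u := x (rshift 1 i); set v := y (rshift 1 j).
  have h1 : a + b != 0 by rewrite gt_eqF // addr_gt0.
  have h2 : u + b != 0 by rewrite gt_eqF // addr_gt0 // xp.
  have h3 : a + v != 0 by rewrite gt_eqF // addr_gt0 // yp.
  have h4 : u + v != 0 by rewrite gt_eqF // addr_gt0 // ?xp ?yp.
  by field; rewrite h1 h2 h3 h4.
have : \det C = \det (ulsubmx C) * \det (\matrix_(i, j) ((xs i - a) / (xs i + b) *
      (xs i + ys j)^-1 * ((ys j - b) / (a + ys j)))).
  by have := congr1 determinant EC; rewrite det_mulmx detE mul1r det_ublock.
rewrite /C => ->.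
rewrite (det_scale_rc (fun i => (xs i - a) / (xs i + b)) (fun j => (ys j - b) / (a + ys j))
   (fun i j => (xs i + ys j)^-1)) det_mx11 !mxE.
apply: mulr_gt0; first by rewrite invr_gt0 addr_gt0.
apply: mulr_gt0; first apply: mulr_gt0.
- apply: prodr_gt0 => i _; apply: divr_gt0; first by rewrite subr_gt0.
  by rewrite addr_gt0.
- apply: IH => // i j lij; [apply: xi | apply: yi]; by [].
- apply: prodr_gt0 => i _; apply: divr_gt0; first by rewrite subr_gt0.
  by rewrite addr_gt0.
Qed.
End Cauchy.
Section FF.
Variable R : realFieldType.

Definition ffp (c : nat) : {poly R} := \prod_(j <- iota 0 c) ('X - (j%:R)%:P).

Lemma size_ffp c : size (ffp c) = c.+1.
Proof. by rewrite /ffp size_prod_XsubC size_iota. Qed.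

Lemma ffp_monic c : ffp c \is monic.
Proof. exact: monic_prod_XsubC. Qed.

Lemma ffp_horner c (x : R) : (ffp c).[x] = \prod_(j <- iota 0 c) (x - j%:R).
Proof. by rewrite /ffp horner_prod; apply: eq_bigr => j _; rewrite hornerXsubC. Qed.

Lemma ff_minor_pos k n (f : 'I_k -> 'I_n) :
  (forall i j : 'I_k, (i < j)%N -> (f i < f j)%N) ->
  0 < \det (\matrix_(r, c) \prod_(j <- iota 0 c) ((f r)%:R - j%:R : R)).
Proof.
move=> incf.
pose a := \row_(r < k) ((f r)%:R : R).
pose W := (Vandermonde k a)^T.
pose U := \matrix_(l < k, c < k) (ffp c)`_l.
have -> : \matrix_(r, c) \prod_(j <- iota 0 c) ((f r)%:R - j%:R : R) = W *m U.
  apply/matrixP => r c; rewrite !mxE -ffp_horner (@horner_coef_wide _ k); last first.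
    by rewrite size_ffp.
  by apply: eq_bigr => l _; rewrite !mxE mulrC.
rewrite det_mulmx; apply: mulr_gt0.
  rewrite /W det_tr det_Vandermonde; apply: prodr_gt0 => i _; apply: prodr_gt0 => j lij.
  by rewrite !mxE subr_gt0 ltr_nat; apply: incf.
rewrite -det_tr det_trig; last first.
  apply/is_trig_mxP => i j lij; rewrite !mxE nth_default // size_ffp //.
have -> : \prod_(i < k) U^T i i = 1.
  apply: big1 => i _; rewrite !mxE.
  have := ffp_monic i; rewrite monicE /lead_coef size_ffp /= => /eqP //.
by [].
Qed.
End FF.
Lemma sum_pow2 k : ((\sum_(c < k) 2 ^ c).+1 = 2 ^ k)%N.
Proof.
elim: k => [|k IH]; first by rewrite big_ord0.
by rewrite big_ord_recr /= -addSn IH expnS mul2n -addnn.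
Qed.

Lemma le_sum_term (R : numDomainType) (I : finType) (F : I -> R) i0 :
  (forall i, 0 <= F i) -> F i0 <= \sum_i F i.
Proof. by move=> F0; rewrite (bigD1 i0) //= lerDl sumr_ge0. Qed.

Lemma mxsub_mul (R : comRingType) m p q k1 k2 (f : 'I_k1 -> 'I_m) (g : 'I_k2 -> 'I_q)
   (A : 'M[R]_(m,p)) (B : 'M[R]_(p,q)) :
  mxsub f g (A *m B) = rowsub f A *m colsub g B.
Proof. by apply/matrixP => i j; rewrite !mxE; apply: eq_bigr => l _; rewrite !mxE. Qed.

Section Dom.
Variable R : realFieldType.
Variable n' : nat.
Local Notation n := n'.+1.

Definition T0 : 'M[R]_n := \matrix_(i, l) \prod_(j <- iota 0 l) ((i : nat)%:R - j%:R).
Definition Ts (u : R) : 'M[R]_n := \matrix_(i, l) (T0 i l * u ^+ (2 ^ l) / u ^+ (2 ^ i)).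

Lemma T0_zero (i l : 'I_n) : (i < l)%N -> T0 i l = 0.
Proof. by move=> il; rewrite mxE (big_rem (val i)) ?mem_iota ?il //= subrr mul0r. Qed.

Lemma T0_diag_pos (i : 'I_n) : 0 < T0 i i.
Proof.
rewrite mxE big_seq; apply: prodr_gt0 => j; rewrite mem_iota => /andP[_ hj].
by rewrite subr_gt0 ltr_nat.
Qed.

Lemma Ts_trig u : is_trig_mx (Ts u).
Proof. by apply/is_trig_mxP => i l il; rewrite mxE T0_zero // !mul0r. Qed.

Lemma Ts_unit u : 0 < u -> Ts u \in unitmx.
Proof.
move=> u0; rewrite unitmxE det_trig ?Ts_trig // unitfE gt_eqF //.
apply: prodr_gt0 => i _; rewrite mxE -mulrA mulfV ?mulr1 ?T0_diag_pos //.
by rewrite gt_eqF // exprn_gt0.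
Qed.

Lemma pow_anti (u : R) m p : 0 <= u -> u <= 1 -> (m <= p)%N -> u ^+ p <= u ^+ m.
Proof.
move=> u0 u1 mp; rewrite -(subnKC mp) exprD; apply: ler_piMr; first exact: exprn_ge0.
exact: exprn_ile1.
Qed.

Lemma dom_step (N : 'M[R]_n) k (hk : (k <= n)%N) (F G : 'I_k -> 'I_n) (u : R) :
  0 < u -> u <= 1 ->
  u * (\sum_(phi : {ffun 'I_k -> 'I_n})
        `|\prod_r (rowsub F T0) r (phi r)| * `|\det (rowsub phi (colsub G N))|)
  < \det (\matrix_(r, c) T0 (F r) (inord c)) * \det (\matrix_(r, c) N (inord r) (G c)) ->
  0 < \det (mxsub F G (Ts u *m N)).
Proof.
move=> u0 u1.
set X0 := rowsub F T0; set Y := colsub G N.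
set B := \sum_(phi : {ffun 'I_k -> 'I_n}) _.
set d0 := \det (\matrix_(r, c) T0 (F r) (inord c)) * _ => hB.
pose Du := diag_mx (\row_(l < n) u ^+ (2 ^ l)).
pose Yu := Du *m Y.
have E1 : mxsub F G (Ts u *m N) = diag_mx (\row_r (u ^+ (2 ^ F r))^-1) *m (X0 *m Yu).
  rewrite mxsub_mul /Yu !mulmxA; congr (_ *m _).
  apply/matrixP => r l; rewrite mul_mx_diag mul_diag_mx !mxE.
  by rewrite mulrC !mulrA.
rewrite E1 det_mulmx det_diag; apply: mulr_gt0.
  by apply: prodr_gt0 => r _; rewrite mxE invr_gt0 exprn_gt0.
set X0' := \matrix_(r, l) (if (l < k)%N then X0 r l else 0) : 'M[R]_(k, n).
pose P := \prod_(c < k) u ^+ (2 ^ c).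
have Ppos : 0 < P by apply: prodr_gt0 => c _; rewrite exprn_gt0.
have rowYu : forall phi : {ffun 'I_k -> 'I_n},
    \det (rowsub phi Yu) = (\prod_r u ^+ (2 ^ phi r)) * \det (rowsub phi Y).
  move=> phi; have -> : rowsub phi Yu = diag_mx (\row_r u ^+ (2 ^ phi r)) *m rowsub phi Y.
    by apply/matrixP => r c; rewrite mul_diag_mx [in LHS]mxE /Yu /Du mul_diag_mx !mxE.
  by rewrite det_mulmx det_diag; congr (_ * _); apply: eq_bigr => r _; rewrite mxE.
have lead : \det (X0' *m Yu) = P * d0.
  have -> : X0' *m Yu = (\matrix_(r < k, c < k) X0 r (inord c)) *m (\matrix_(c < k, c' < k) Yu (inord c) c').
    apply/matrixP => r c'; rewrite !mxE.
    rewrite (eq_bigr (fun l : 'I_n => if (l < k)%N then X0 r (inord l) * Yu (inord l) c' else 0)); last first.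
      by move=> l _; rewrite mxE; case: ifP => _; [rewrite inord_val | rewrite mul0r].
    rewrite -big_mkcond /= -(big_ord_widen _ (fun m => X0 r (inord m) * Yu (inord m) c') hk).
    by apply: eq_bigr => c _; rewrite !mxE.
  rewrite det_mulmx.
  have -> : \matrix_(c < k, c' < k) Yu (inord c) c' =
      \matrix_(c < k, c' < k) (u ^+ (2 ^ c) * N (inord c) (G c') * 1).
    apply/matrixP => c c'; rewrite [in LHS]mxE /Yu /Du mul_diag_mx !mxE mulr1.
    by rewrite (inordK (leq_trans (ltn_ord c) hk)).
  rewrite (det_scale_rc (fun c : 'I_k => u ^+ (2 ^ c)) (fun _ => 1)
             (fun c c' => N (inord c) (G c'))) big1_eq mulr1 -/P.
  have -> : \matrix_(r < k, c < k) X0 r (inord c) = \matrix_(r < k, c < k) T0 (F r) (inord c).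
    by apply/matrixP => r c; rewrite !mxE.
  by rewrite /d0 mulrCA.
have Hsplit : \det (X0 *m Yu) = \det (X0' *m Yu) + \sum_(phi : {ffun 'I_k -> 'I_n})
    ((\prod_r X0 r (phi r)) - \prod_r X0' r (phi r)) * \det (rowsub phi Yu).
  rewrite !detM_expand -big_split /=; apply: eq_bigr => phi _; ring.
have Pk : u ^+ (2 ^ k) = u * P.
  by rewrite /P prodrXr -exprS sum_pow2.
have rem : `|\sum_(phi : {ffun 'I_k -> 'I_n})
    ((\prod_r X0 r (phi r)) - \prod_r X0' r (phi r)) * \det (rowsub phi Yu)| <= u * P * B.
  apply: le_trans (ler_norm_sum _ _ _) _.
  rewrite /B mulr_sumr; apply: ler_sum => phi _.
  rewrite rowYu.
  case: (boolP [forall r, (phi r < k)%N]) => [/forallP allk | /forallPn [r0 hr0]].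
    have -> : \prod_r X0' r (phi r) = \prod_r X0 r (phi r).
      by apply: eq_bigr => r _; rewrite mxE allk.
    rewrite subrr mul0r normr0; apply: mulr_ge0; last by rewrite mulr_ge0.
    by rewrite mulr_ge0 // ltW.
  have -> : \prod_r X0' r (phi r) = 0 by rewrite (bigD1 r0) //= mxE (negbTE hr0) mul0r.
  rewrite subr0 !normrM.
  have hw : `|\prod_r u ^+ (2 ^ phi r)| <= u * P.
    rewrite -Pk ger0_norm ?prodr_ge0 // => [|r _]; last by rewrite exprn_ge0 // ltW.
    rewrite (bigD1 r0) //=; apply: le_trans (ler_piMr _ _) _.
    - by rewrite exprn_ge0 // ltW.
    - apply: prodr_ile1 => r _; apply/andP; split; [exact: exprn_ge0 (ltW u0) | exact: exprn_ile1 (ltW u0) u1].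
    apply: pow_anti => //; first exact: ltW.
    by apply: leq_pexp2l => //; rewrite leqNgt.
  rewrite mulrCA [X in _ <= X]mulrC [X in _ <= X]mulrC.
  by apply: ler_wpM2r => //; rewrite mulr_ge0.
rewrite Hsplit lead.
move: rem; set x := \sum_(phi : {ffun 'I_k -> 'I_n}) _ => rem.
have hPB : u * P * B < P * d0 by rewrite mulrAC mulrC ltr_pM2l.
move: rem; rewrite ler_norml => /andP[h1 _].
lra.
Qed.

Lemma incr_inj k (F : 'I_k -> 'I_n) :
  (forall i j : 'I_k, (i < j)%N -> (F i < F j)%N) -> injective F.
Proof.
move=> incF i j e; apply: val_inj; case: (ltngtP i j) => // hij.
  by have := incF _ _ hij; rewrite e ltnn.
by have := incF _ _ hij; rewrite e ltnn.
Qed.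

Lemma incr_le k (F : 'I_k -> 'I_n) :
  (forall i j : 'I_k, (i < j)%N -> (F i < F j)%N) -> (k <= n)%N.
Proof. by move=> /incr_inj /leq_card; rewrite !card_ord. Qed.

Lemma dominance (N : 'M[R]_n) :
  (forall k (G : 'I_k -> 'I_n), (k <= n)%N -> (forall i j : 'I_k, (i < j)%N -> (G i < G j)%N) ->
      0 < \det (\matrix_(r < k, c < k) N (inord r) (G c))) ->
  exists u, 0 < u /\ forall k (F G : 'I_k -> 'I_n),
     (forall i j : 'I_k, (i < j)%N -> (F i < F j)%N) ->
     (forall i j : 'I_k, (i < j)%N -> (G i < G j)%N) ->
     0 < \det (mxsub F G (Ts u *m N)).
Proof.
move=> HN.
pose d0 k (F G : 'I_k -> 'I_n) := \det (\matrix_(r < k, c < k) T0 (F r) (inord c)) *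
    \det (\matrix_(r < k, c < k) N (inord r) (G c)).
pose B k (F G : 'I_k -> 'I_n) := \sum_(phi : {ffun 'I_k -> 'I_n})
    `|\prod_r (rowsub F T0) r (phi r)| * `|\det (rowsub phi (colsub G N))|.
pose q k (F G : {ffun 'I_k -> 'I_n}) := B k F G / `|d0 k F G|.
have q0 : forall k F G, 0 <= q k F G.
  by move=> k F G; rewrite /q divr_ge0 // sumr_ge0 // => *; rewrite mulr_ge0.
pose S := \sum_(k < n.+1) \sum_(F : {ffun 'I_k -> 'I_n}) \sum_(G : {ffun 'I_k -> 'I_n}) q k F G.
have S0 : 0 <= S by apply: sumr_ge0 => k _; apply: sumr_ge0 => F _; apply: sumr_ge0.
have S1 : 0 < 1 + S by lra.
exists (1 + S)^-1; split; first by rewrite invr_gt0.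
move=> k F G incF incG.
have hk := incr_le incF.
pose F' := [ffun r => F r]; pose G' := [ffun r => G r].
have incF' : forall i j : 'I_k, (i < j)%N -> (F' i < F' j)%N by move=> i j; rewrite !ffunE; apply: incF.
have incG' : forall i j : 'I_k, (i < j)%N -> (G' i < G' j)%N by move=> i j; rewrite !ffunE; apply: incG.
have -> : mxsub F G (Ts ((1 + S)^-1) *m N) = mxsub F' G' (Ts ((1 + S)^-1) *m N).
  by apply/matrixP => i j; rewrite !mxE !ffunE.
apply: (dom_step hk) => //; first by rewrite invr_gt0.
  by rewrite invf_le1 // lerDl.
have dpos : 0 < d0 k F' G'.
  apply: mulr_gt0; last exact: HN.
  have -> : \matrix_(r < k, c < k) T0 (F' r) (inord c) =
      \matrix_(r, c) \prod_(j <- iota 0 c) ((F' r)%:R - j%:R : R).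
    apply/matrixP => r c; rewrite !mxE (inordK (leq_trans (ltn_ord c) hk)) //.
  exact: ff_minor_pos.
have hq : q k F' G' <= S.
  have h1 := @le_sum_term _ _ (fun G0 => q k F' G0) G' (q0 k F').
  apply: le_trans h1 _.
  apply: le_trans (@le_sum_term _ _ (fun F0 => \sum_G0 q k F0 G0) F' _) _.
    by move=> F0; apply: sumr_ge0.
  have hk' : (k < n.+1)%N by [].
  exact: (@le_sum_term _ _ (fun k0 : 'I_n.+1 => \sum_(F0 : {ffun 'I_k0 -> 'I_n}) \sum_(G0 : {ffun 'I_k0 -> 'I_n}) q k0 F0 G0) (Ordinal hk') (fun k0 => sumr_ge0 _ (fun F0 _ => sumr_ge0 _ (fun G0 _ => q0 k0 F0 G0)))).
move: hq; rewrite /q (ger0_norm (ltW dpos)) ler_pdivrMr // => hq.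
rewrite mulrC ltr_pdivrMr // mulrDr mulr1.
have : 0 < d0 k F' G' := dpos.
rewrite -/(B k F' G') -/(d0 k F' G') in hq *.
nra.
Qed.
End Dom.
Section GV.
Variable R : realFieldType.
Variable n : nat.

Definition Gv (v : R) : 'M[R]_n :=
  \matrix_(l, j) (2 * v ^+ l * v ^+ j / (v ^+ l ^+ 2 + v ^+ j ^+ 2)).

Lemma Gv_minor_pos (v : R) k (f g : 'I_k -> 'I_n) : 1 < v ->
  (forall i j : 'I_k, (i < j)%N -> (f i < f j)%N) ->
  (forall i j : 'I_k, (i < j)%N -> (g i < g j)%N) ->
  0 < \det (mxsub f g (Gv v)).
Proof.
move=> v1 incf incg.
have v0 : 0 < v by lra.
have apos : forall m, 0 < v ^+ m by move=> m; rewrite exprn_gt0.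
have -> : mxsub f g (Gv v) = \matrix_(r, c) ((2 * v ^+ f r) *
      (v ^+ f r ^+ 2 + v ^+ g c ^+ 2)^-1 * v ^+ g c).
  by apply/matrixP => r c; rewrite !mxE; rewrite mulrAC.
rewrite (det_scale_rc (fun r => 2 * v ^+ f r) (fun c => v ^+ g c)
   (fun r c => (v ^+ f r ^+ 2 + v ^+ g c ^+ 2)^-1)).
apply: mulr_gt0; first apply: mulr_gt0.
- by apply: prodr_gt0 => r _; rewrite mulr_gt0.
- apply: (cauchy_pos (x := fun r => v ^+ f r ^+ 2) (y := fun c => v ^+ g c ^+ 2)).
  + move=> i j lij; have hl : v ^+ f i < v ^+ f j by rewrite ltr_eXn2l // incf.
    by rewrite !expr2 ltr_pM // ltW.
  + move=> i j lij; have hl : v ^+ g i < v ^+ g j by rewrite ltr_eXn2l // incg.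
    by rewrite !expr2 ltr_pM // ltW.
  + by move=> i; rewrite exprn_gt0.
  + by move=> i; rewrite exprn_gt0.
- by apply: prodr_gt0 => r _.
Qed.

Lemma Gv_close (v : R) (l j : 'I_n) : 1 < v ->
  `|Gv v l j - (l == j)%:R| <= 2 / v.
Proof.
move=> v1; have v0 : 0 < v by lra.
have apos : forall m, 0 < v ^+ m by move=> m; rewrite exprn_gt0.
rewrite mxE; case: eqP => [->|/eqP ne].
  have h : v ^+ j ^+ 2 != 0 by rewrite gt_eqF // exprn_gt0.
  have e : 2 * v ^+ j * v ^+ j / (v ^+ j ^+ 2 + v ^+ j ^+ 2) = 1.
    have hd : v ^+ j ^+ 2 + v ^+ j ^+ 2 != 0 by rewrite gt_eqF // addr_gt0 // exprn_gt0.
    apply: (mulIf hd); rewrite mul1r mulfVK //; ring.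
  by rewrite e /= subrr normr0 divr_ge0 // ltW.
rewrite subr0 ger0_norm; last first.
  by rewrite divr_ge0 // ?mulr_ge0 ?ltW // ?addr_gt0 ?exprn_gt0 ?apos.
have key : forall a b : nat, (a < b)%N ->
    2 * v ^+ a * v ^+ b / (v ^+ a ^+ 2 + v ^+ b ^+ 2) <= 2 / v.
  move=> a b ab.
  have hb : v * v ^+ a <= v ^+ b.
    by rewrite -exprS ler_eXn2l.
  have pa := apos a; have pb := apos b.
  rewrite ler_pdivrMr ?addr_gt0 ?exprn_gt0 //.
  rewrite [X in _ <= X]mulrAC ler_pdivlMr //.
  have : v * v ^+ a * v ^+ b <= v ^+ b * v ^+ b by rewrite ler_wpM2r // ltW.
  rewrite !expr2. nra.
case: (ltngtP l j) => h.
- exact: key.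
- by rewrite [_ * v ^+ j]mulrAC addrC; apply: key.
- by move: ne; rewrite (val_inj h) eqxx.
Qed.
End GV.
Local Open Scope classical_set_scope.

Section Cont.
Variable R : realType.

Lemma entry_cont m p (i : 'I_m) (j : 'I_p) : continuous (fun X : 'M[R]_(m, p) => X i j).
Proof.
move=> X A /nbhs_ballP [e /= e0 eA]; apply/nbhs_ballP; exists e => //= Y [_ XY].
exact: eA (XY i j).
Qed.

Lemma det_cont m k (f g : 'I_k -> 'I_m) : continuous (fun X : 'M[R]_m => \det (mxsub f g X)).
Proof.
have -> : (fun X : 'M[R]_m => \det (mxsub f g X)) =
    (fun X => \sum_(s : 'S_k) ((-1) ^+ s * \prod_i X (f i) (g (s i)))).
  apply: funext => X; rewrite /determinant; apply: eq_bigr => s _; congr (_ * _).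
  by apply: eq_bigr => i _; rewrite mxE.
apply: (@continuous_big _ _ +%R 0 predT add_continuous) => s _ X.
have H : continuous (fun X : 'M[R]_m => \prod_i X (f i) (g (s i))).
  have := @continuous_big R _ *%R 1 predT (@mul_continuous R) _ (index_enum 'I_k) (fun i (X : 'M[R]_m) => X (f i) (g (s i))).
  apply => i _; exact: entry_cont.
exact: (continuousM (@cst_continuous _ _ ((-1) ^+ s : R) X) (H X)).
Qed.
End Cont.

Section Main.
Variable R : realType.
Variable n' : nat.
Local Notation n := n'.+1.

Lemma flag_minor_hK (M : 'M[R]_n) (K : {set 'I_n}) k (f0 : 'I_k -> 'I_n) :
  (forall r, val (f0 r) = val r) -> #|K| = k ->
  flag_minor M K = \det (mxsub f0 (hK ord0 k K) M).
Proof.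
move=> f0E cK; subst k; rewrite /flag_minor; congr determinant.
apply/matrixP => i j; rewrite !mxE.
have -> : top_rows i = f0 i by apply: val_inj; rewrite f0E.
by rewrite (enum_val_nth ord0).
Qed.

Lemma flag_minor_LM (L M : 'M[R]_n) (I : {set 'I_n}) : is_trig_mx L ->
  flag_minor (L *m M) I = (\prod_(l < n | (l < #|I|)%N) L l l) * flag_minor M I.
Proof.
move=> /is_trig_mxP Lt; rewrite /flag_minor.
have le := card_set_ord_le I.
have tw : forall r, top_rows r = widen_ord le r by move=> r; apply: val_inj.
have -> : mxsub (@top_rows n I) (fun j : 'I_#|I| => @enum_val _ (pred_of_set I) j) (L *m M) =
    mxsub (@top_rows n I) (@top_rows n I) L *m mxsub (@top_rows n I) (fun j : 'I_#|I| => @enum_val _ (pred_of_set I) j) M.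
  apply/matrixP => i j; rewrite !mxE.
  rewrite (bigID (fun l : 'I_n => (l < #|I|)%N)) /= [X in _ + X]big1 ?addr0; last first.
    move=> l; rewrite -leqNgt => hl; rewrite Lt ?mul0r //.
    by rewrite (leq_trans _ hl) //= ltn_ord.
  rewrite (big_ord_narrow le); by apply: eq_bigr => r _; rewrite !mxE !tw.
rewrite det_mulmx det_trig; last first.
  by apply/is_trig_mxP => i j ij; rewrite mxE Lt.
rewrite (big_ord_narrow le); congr (_ * _); apply: eq_bigr => r _; by rewrite mxE !tw.
Qed.

Lemma flag_minor_set0 (M : 'M[R]_n) (I : {set 'I_n}) : #|I| = 0%N -> flag_minor M I = 1.
Proof.
move=> c0; rewrite (@flag_minor_hK M I 0 (widen_ord (leq0n n))) //.
exact: det_mx00.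
Qed.

Lemma top_rows_incr (I : {set 'I_n}) : incr (@top_rows n I).
Proof. by move=> i j. Qed.

Lemma enum_val_incr (I : {set 'I_n}) : incr (fun j : 'I_#|I| => @enum_val _ (pred_of_set I) j).
Proof.
move=> i j ij; rewrite !(enum_val_nth ord0).
exact: (@hK_incr n ord0 #|I| I erefl i j ij).
Qed.

Lemma TP_flag_minor (A : 'M[R]_n) I : totally_positive A -> 0 < flag_minor A I.
Proof. by move=> tp; apply: tp; [exact: top_rows_incr | exact: enum_val_incr]. Qed.

Lemma trig_diag_unit (L : 'M[R]_n) : is_trig_mx L -> L \in unitmx -> forall l, L l l != 0.
Proof.
move=> Lt; rewrite unitmxE det_trig // unitfE prodf_seq_neq0 => /allP H l.
by have := H l (mem_index_enum l).
Qed.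

Lemma open_S (I J : {set 'I_n}) :
  open [set X : 'M[R]_n | X \in unitmx /\ flag_minor X I * flag_minor X J < 0].
Proof.
rewrite openE => X [Xu Xneg].
have c1 : continuous (fun Y : 'M[R]_n => \det Y).
  have -> : (fun Y : 'M[R]_n => \det Y) = (fun Y => \det (mxsub id id Y)).
    by apply: funext => Y; congr determinant; apply/matrixP => i j; rewrite mxE.
  exact: det_cont.
have cI : forall K : {set 'I_n}, continuous (fun Y : 'M[R]_n => flag_minor Y K).
  by move=> K; exact: det_cont.
have cP : {for X, continuous (fun Y : 'M[R]_n => flag_minor Y I * flag_minor Y J)}.
  exact: (continuousM (cI I X) (cI J X)).
have n1 : nbhs X [set Y : 'M[R]_n | \det Y != 0].
  have h : nbhs (\det X) [set r : R | r != 0].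
    apply: open_nbhs_nbhs; split; first exact: open_neq.
    by rewrite /= -unitfE -unitmxE.
  exact: (c1 X _ h).
have n2 : nbhs X [set Y : 'M[R]_n | flag_minor Y I * flag_minor Y J < 0].
  have h : nbhs (flag_minor X I * flag_minor X J) [set r : R | r < 0].
    by apply: open_nbhs_nbhs; split; first exact: open_lt.
  exact: (cP _ h).
rewrite /interior; apply: filterS (filterI n1 n2) => Y [/= h1 h2]; split => //.
by rewrite unitmxE unitfE.
Qed.

Lemma fwd (F : 'M[R]_n) : Fl_nonneg F ->
  exists M : 'M[R]_n, same_flag F M /\ forall I : {set 'I_n}, 0 <= flag_minor M I.
Proof.
case=> Frep HF.
have cons : forall I J : {set 'I_n}, #|I| = #|J| ->
    ~ (0 < flag_minor F I /\ flag_minor F J < 0).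
  move=> I J cIJ [hI hJ].
  pose S := [set X : 'M[R]_n | X \in unitmx /\ flag_minor X I * flag_minor X J < 0].
  have oS : flag_open_set S.
    split; first exact: open_S.
    split; first by move=> X [].
    move=> X Y [L [Lu Lt ->]] [Xu Xneg]; split; first by rewrite unitmx_mul Lu Xu.
    rewrite !flag_minor_LM // cIJ.
    set c := \prod_(l < n | (l < #|J|)%N) L l l.
    have c0 : c != 0 by rewrite prodf_seq_neq0; apply/allP => l _; apply/implyP => _; exact: trig_diag_unit.
    have : 0 < c * c by rewrite -expr2 exprn_even_gt0.
    nra.
  have SF : S F by split => //; rewrite pmulr_rlt0.
  case: (HF S oS SF) => N [[_ hN] [_ [A [tpA [L [Lu Lt eN]]]]]].
  move: hN; rewrite eN !flag_minor_LM // cIJ.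
  set c := \prod_(l < n | (l < #|J|)%N) L l l.
  have h1 := TP_flag_minor I tpA; have h2 := TP_flag_minor J tpA.
  have : 0 <= c * c by rewrite -expr2 sqr_ge0.
  have : 0 < flag_minor A I * flag_minor A J by rewrite mulr_gt0.
  nra.
pose sig (k : nat) : R := if [exists I : {set 'I_n}, (#|I| == k) && (flag_minor F I < 0)] then -1 else 1.
have sig2 : forall k, sig k * sig k = 1 by move=> k; rewrite /sig; case: ifP => _; rewrite ?mulrNN mulr1.
have sig0 : sig 0%N = 1.
  rewrite /sig; case: existsP => // [[I /andP [/eqP c0 neg]]].
  by move: neg; rewrite flag_minor_set0 // ltr10.
pose eps (l : nat) : R := sig l.+1 * sig l.
have tele : forall k, \prod_(l < k) eps l = sig k.
  elim => [|k IH]; first by rewrite big_ord0 sig0.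
  rewrite big_ord_recr /= IH /eps mulrCA sig2 mulr1 //.
pose D : 'M[R]_n := diag_mx (\row_(l < n) eps l).
have Dt : is_trig_mx D by apply: diag_mx_is_trig.
exists (D *m F); split.
  exists D; split => //.
  rewrite unitmxE det_diag unitfE prodf_seq_neq0; apply/allP => l _; apply/implyP => _.
  rewrite mxE /eps mulf_neq0 // /sig; case: ifP => _; by rewrite ?oppr_eq0 oner_eq0.
move=> I; rewrite flag_minor_LM //.
have -> : \prod_(l < n | (l < #|I|)%N) D l l = sig #|I|.
  rewrite -tele (big_ord_widen n eps (card_set_ord_le I)).
  by apply: eq_bigr => l _; rewrite !mxE eqxx mulr1n.
rewrite /sig; case: existsP => [[J /andP [/eqP cJ hJ]] | nex].
  rewrite mulN1r oppr_ge0; rewrite leNgt; apply/negP => hI.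
  by apply: (cons I J) => //; rewrite cJ.
rewrite mul1r leNgt; apply/negP => hI; apply: nex; exists I; by rewrite eqxx hI.
Qed.

Lemma det_cr (m k : nat) (f g : 'I_k -> 'I_m) (A : 'M[R]_m) :
  \det (colsub g (rowsub f A)) = \det (mxsub f g A).
Proof. by congr determinant; apply/matrixP => i j; rewrite !mxE. Qed.

Lemma det_rc (m k : nat) (f g : 'I_k -> 'I_m) (A : 'M[R]_m) :
  \det (rowsub f (colsub g A)) = \det (mxsub f g A).
Proof. by congr determinant; apply/matrixP => i j; rewrite !mxE. Qed.

Lemma bwd (F M : 'M[R]_n) : flag_rep F -> same_flag F M ->
  (forall I, 0 <= flag_minor M I) -> Fl_nonneg F.
Proof.
move=> Frep sFM HM; split => // S [oS [Srep Ssat]] SF.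
have SM := Ssat F M sFM SF.
have Mu : M \in unitmx := Srep M SM.
have gm : forall k (hk : (k <= n)%N) (K : {set 'I_n}), #|K| = k ->
    0 <= \det (mxsub (widen_ord hk) (hK ord0 k K) M).
  by move=> k hk K cK; rewrite -(@flag_minor_hK M K k (widen_ord hk)).
have ex : forall k (hk : (k <= n)%N), exists K : {set 'I_n},
    #|K| = k /\ 0 < \det (mxsub (widen_ord hk) (hK ord0 k K) M).
  move=> k hk.
  pose f0 := widen_ord hk.
  have one : \det (rowsub f0 M *m colsub f0 (invmx M)) = 1.
    rewrite -mxsub_mul mulmxV //.
    have -> : mxsub f0 f0 (1%:M : 'M[R]_n) = 1%:M.
      apply/matrixP => i j; rewrite !mxE; congr (_ *+ _).
    by rewrite det1.
  move: one; rewrite (cauchy_binet ord0) => one.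
  case: (pselect (exists K : {set 'I_n}, #|K| = k /\ 0 < \det (mxsub f0 (hK ord0 k K) M))) => // nK.
  exfalso.
  have : \sum_(K : {set 'I_n} | #|K| == k) \det (colsub (hK ord0 k K) (rowsub f0 M)) *
      \det (rowsub (hK ord0 k K) (colsub f0 (invmx M))) = 0.
    apply: big1 => K /eqP cK; rewrite det_cr.
    have h0 := gm k hk K cK.
    have : \det (mxsub f0 (hK ord0 k K) M) = 0.
      move: h0; rewrite le_eqVlt => /orP [/eqP <- //| h]; exfalso; apply: nK; by exists K.
    by move=> ->; rewrite mul0r.
  by move=> h; move: one; rewrite h => /eqP; rewrite eq_sym oner_eq0.
have nS : nbhs M S by move: oS; rewrite openE => /(_ M SM).
case/nbhs_ballP: nS => e e0 eS.
pose C := \sum_(i < n) \sum_(l < n) `|M i l|.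
have C0 : 0 <= C by apply: sumr_ge0 => i _; apply: sumr_ge0.
pose v := 2 + 2 * (C + 1) / e.
have v1 : 1 < v.
  have : 0 < 2 * (C + 1) / e by rewrite divr_gt0 // mulr_gt0 //; lra.
  rewrite /v; lra.
have v0 : 0 < v by lra.
pose N := M *m Gv n v.
have hCe : 2 / v * C < e.
  rewrite mulrAC ltr_pdivrMr // /v mulrDr mulrCA mulfV ?gt_eqF // mulr1.
  apply: (lt_le_trans (y := 2 * (C + 1))); first by rewrite ltr_pM2l // ltrDl ltr01.
  by rewrite lerDr mulr_ge0 // ltW.
have SN : S N.
  apply: eS; split => // i j.
  rewrite /ball /=.
  have -> : M i j - N i j = - \sum_l M i l * (Gv n v l j - (l == j)%:R).
    have -> : M i j = \sum_l M i l * (l == j)%:R.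
      rewrite -[LHS](congr1 (fun A : 'M[R]_n => A i j) (mulmx1 M)) mxE.
      by apply: eq_bigr => l _; rewrite mxE.
    rewrite /N mxE -sumrB -sumrN; apply: eq_bigr => l _; ring.
  rewrite normrN; apply: le_lt_trans hCe.
  apply: le_trans (ler_norm_sum _ _ _) _.
  apply: (le_trans (y := \sum_l `|M i l| * (2 / v))).
    apply: ler_sum => l _; rewrite normrM; apply: ler_wpM2l => //.
    exact: Gv_close.
  rewrite -mulr_suml mulrC; apply: ler_wpM2l; first by rewrite divr_ge0 // ltW.
  exact: (@le_sum_term _ _ (fun i0 => \sum_(l < n) `|M i0 l|) i (fun i0 => sumr_ge0 _ (fun l _ => normr_ge0 _))).
have Gu : Gv n v \in unitmx.
  rewrite unitmxE unitfE gt_eqF //.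
  have := @Gv_minor_pos R n v n id id v1 (fun i j h => h) (fun i j h => h).
  have eG : mxsub id id (Gv n v) = Gv n v by apply/matrixP => i j; rewrite mxE.
  by rewrite eG.
have Nu : N \in unitmx by rewrite unitmx_mul Mu Gu.
have HN : forall k (G : 'I_k -> 'I_n), (k <= n)%N ->
    (forall i j : 'I_k, (i < j)%N -> (G i < G j)%N) ->
    0 < \det (\matrix_(r < k, c < k) N (inord r) (G c)).
  move=> k G hk incG.
  have -> : \matrix_(r < k, c < k) N (inord r) (G c) = rowsub (widen_ord hk) M *m colsub G (Gv n v).
    apply/matrixP => r c; rewrite !mxE; apply: eq_bigr => l _; rewrite ?mxE.
    have -> : (inord r : 'I_n) = widen_ord hk r.
      by apply: val_inj; rewrite /= inordK // (leq_trans (ltn_ord r) hk).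
    by [].
  rewrite (cauchy_binet ord0).
  case: (ex k hk) => K0 [cK0 pK0].
  rewrite (bigD1 K0) /=; last by rewrite cK0.
  have t1 : 0 < \det (colsub (hK ord0 k K0) (rowsub (widen_ord hk) M)) *
      \det (rowsub (hK ord0 k K0) (colsub G (Gv n v))).
    rewrite det_cr det_rc; apply: mulr_gt0 => //.
    by apply: Gv_minor_pos => //; apply: (hK_incr ord0 cK0).
  have t2 : 0 <= \sum_(K : {set 'I_n} | (#|K| == k) && (K != K0))
      \det (colsub (hK ord0 k K) (rowsub (widen_ord hk) M)) *
      \det (rowsub (hK ord0 k K) (colsub G (Gv n v))).
    apply: sumr_ge0 => K /andP [/eqP cK _]; rewrite det_cr det_rc; apply: mulr_ge0.
      exact: gm.
    by apply/ltW/Gv_minor_pos => //; apply: (hK_incr ord0 cK).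
  lra.
case: (dominance HN) => u [u0 Hu].
pose A := Ts n' u *m N.
have SA : S A.
  apply: (Ssat N A) => //; exists (Ts n' u); split => //; [exact: Ts_unit | exact: Ts_trig].
exists A; split => //.
split; first by rewrite /flag_rep unitmx_mul Ts_unit.
exists A; split; first by move=> k f g incf incg; exact: Hu.
by exists 1%:M; split; [exact: unitmx1 | exact: scalar_mx_is_trig | rewrite mul1mx].
Qed.

End Main.

Theorem mainTheorem1 (R : realType) (n : nat) (hn : (1 <= n)%N) (F : 'M[R]_n) :
  flag_rep F ->
  (Fl_nonneg F <->
   exists M : 'M[R]_n, same_flag F M /\ forall I : {set 'I_n}, 0 <= flag_minor M I).
Proof.
case: n hn F => [//|n'] _ F Frep; split; first exact: fwd.
by case=> M [sFM HM]; exact: (bwd Frep sFM HM).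
Qed.
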